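(* Let $r>0$, $0<p<1$, $q=1-p$, and let $X\sim\mathcal{UNB}(r,p)$ with probability mass function $$p(x)=\frac{q^{x}p^{r}}{1+x}\binom{r+x-1}{x}\,{}_2F_1(1,r+x;2+x;q),\qquad x=0,1,2,\dots.$$ Then for every $x=0,1,2,\dots$, $$p(x+1)=p(x)-\frac{p^{r}q^{x}}{x+1}\binom{r+x-1}{r-1},$$ and consequently $p(x+1)<p(x)$ for all $x\ge 0$, i.e. the distribution is strictly decreasing with mode at $0$.
   Context: For real $r>0$ and integer $x\ge0$, $\binom{r+x-1}{x}=\binom{r+x-1}{r-1}=\frac{\Gamma(r+x)}{x!\,\Gamma(r)}$. ${}_2F_1(a,b;c;z)=\sum_{n\ge0}\frac{(a)_n(b)_n}{(c)_n}\frac{z^n}{n!}$ with $(s)_n=s(s+1)\cdots(s+n-1)$, $(s)_0=1$. $\mathcal{UNB}(r,p)$ is the law of $X$ where $N$ is negative binomial with $P(N=n)=\binom{r+n-1}{n}p^rq^n$ and $X\mid N=n$ is uniform on $\{0,\dots,n\}$. *)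

(* Defs.v *)
From Stdlib Require Import Reals Arith.
From Coquelicot Require Import Coquelicot.
Open Scope R_scope.

Fixpoint poch (s : R) (n : nat) : R :=
  match n with
  | O => 1
  | S m => poch s m * (s + INR m)
  end.

(* Generalized binomial coefficient binom(r+x-1, x) = Gamma(r+x)/(x! Gamma(r))
   = (r)_x / x!  (for real r > 0 and integer x >= 0); this is also
   binom(r+x-1, r-1) by the convention of the paper. *)
Definition nbinom (r : R) (x : nat) : R := poch r x / INR (Factorial.fact x).

Definition hyp2F1 (a b c z : R) : R :=
  Series (fun n => poch a n * poch b n / poch c n * z ^ n / INR (Factorial.fact n)).

Definition nb_pmf (r p : R) (n : nat) : R :=
  nbinom r n * Rpower p r * (1 - p) ^ n.

(* UNB(r,p): X | N = n uniform on {0,...,n}, N negative binomial.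
   P(X = x) = sum_n P(N = n) * [x <= n] / (n+1). *)
Definition unb_pmf (r p : R) (x : nat) : R :=
  Series (fun n => nb_pmf r p n * (if Nat.leb x n then / INR (n + 1) else 0)).

(* Main.v *)
Require Import Defs.
From Stdlib Require Import Reals Lra Lia.
From Coquelicot Require Import Coquelicot.
Open Scope R_scope.

Lemma poch_pos s n : 0 < s -> 0 < poch s n.
Proof.
  intro hs; induction n; simpl; [lra|].
  apply Rmult_lt_0_compat; auto. pose proof (pos_INR n); lra.
Qed.

Lemma poch_add s x k : poch s (x + k) = poch s x * poch (s + INR x) k.
Proof.
  induction k; simpl.
  - rewrite Nat.add_0_r; ring.
  - rewrite Nat.add_succ_r; simpl. rewrite IHk, plus_INR; ring.
Qed.

Lemma poch_1 k : poch 1 k = INR (Factorial.fact k).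
Proof.
  induction k; simpl; [reflexivity|].
  rewrite IHk. change (Factorial.fact k + k * Factorial.fact k)%nat with (S k * Factorial.fact k)%nat.
  rewrite mult_INR, S_INR. ring.
Qed.

Lemma poch_2 x k : poch (2 + INR x) k * INR (Factorial.fact (S x)) = INR (Factorial.fact (S x + k)).
Proof.
  induction k; cbn [poch].
  - rewrite Nat.add_0_r; ring.
  - rewrite Nat.add_succ_r.
    change (Factorial.fact (S (S x + k))) with (S (S x + k) * Factorial.fact (S x + k))%nat.
    rewrite mult_INR, <- IHk, S_INR, !plus_INR, S_INR. ring.
Qed.

Lemma fact_pos n : 0 < INR (Factorial.fact n).
Proof. apply lt_0_INR, Factorial.lt_O_fact. Qed.

Section S.
Variables r p : R.
Hypothesis hr : 0 < r.
Hypothesis hp0 : 0 < p.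
Hypothesis hp1 : p < 1.

Definition b n := nb_pmf r p n / INR (n + 1).

Lemma b_pos n : 0 < b n.
Proof.
  unfold b, nb_pmf, nbinom.
  apply Rdiv_lt_0_compat; [|apply lt_0_INR; lia].
  apply Rmult_lt_0_compat; [apply Rmult_lt_0_compat|].
  - apply Rdiv_lt_0_compat; [apply poch_pos; auto| apply fact_pos].
  - apply exp_pos.
  - apply pow_lt; lra.
Qed.

Lemma b_ratio n : Rabs (b (S n) / b n) = (1 - p) * (r + INR n) * / (INR n + 2).
Proof.
  pose proof (b_pos n). pose proof (b_pos (S n)).
  rewrite Rabs_pos_eq by (apply Rlt_le, Rdiv_lt_0_compat; auto).
  unfold b, nb_pmf, nbinom. simpl poch.
  change (Factorial.fact (S n)) with (S n * Factorial.fact n)%nat.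
  rewrite mult_INR. rewrite !plus_INR, !S_INR. simpl pow.
  pose proof (fact_pos n). pose proof (pos_INR n).
  pose proof (poch_pos r n hr). pose proof (exp_pos (r * ln p)).
  assert (0 < 1 - p) by lra. assert (0 < (1-p)^n) by (apply pow_lt; lra).
  change (INR 0) with 0. unfold Rpower. field. repeat split; try lra.
Qed.

Lemma ex_b : ex_series b.
Proof.
  apply ex_series_ext with (fun n => Rabs (b n)).
  { intro n; apply Rabs_pos_eq, Rlt_le, b_pos. }
  apply ex_series_DAlembert with (1 - p); [lra| intro n; apply Rgt_not_eq, b_pos|].
  eapply is_lim_seq_ext. { intro n; symmetry; apply b_ratio. }
  assert (L : is_lim_seq (fun n => (1 - p) * (1 + (r - 2) * / INR (n + 2))) ((1 - p) * (1 + (r - 2) * 0))).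
  2: { replace ((1 - p) * (1 + (r - 2) * 0)) with (1 - p) in L by ring.
       eapply is_lim_seq_ext; [|exact L]. intro n. cbv beta. rewrite plus_INR. change (INR 2) with 2.
       field. pose proof (pos_INR n); lra. }
  apply is_lim_seq_mult'; [apply is_lim_seq_const|].
  apply is_lim_seq_plus'; [apply is_lim_seq_const|].
  apply is_lim_seq_mult'; [apply is_lim_seq_const|].
  change (is_lim_seq (fun n => / INR (n + 2)) (Rbar_inv p_infty)).
  apply is_lim_seq_inv; [|discriminate].
  apply (is_lim_seq_incr_n INR 2 p_infty), is_lim_seq_INR.
Qed.

Lemma shift_series : forall x (c : nat -> R), (forall n, 0 <= c n) -> ex_series c ->
  Series (fun n => if Nat.leb x n then c n else 0) = Series (fun k => c (x + k)%nat).
Proof.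
  induction x; intros c hc hex.
  - apply Series_ext; intro n; reflexivity.
  - rewrite Series_incr_1.
    + simpl. rewrite Rplus_0_l.
      rewrite (IHx (fun k => c (S k))).
      * apply Series_ext; intro n. f_equal.
      * intro; apply hc.
      * apply ex_series_incr_1 in hex; exact hex.
    + apply (@ex_series_le R_AbsRing R_CompleteNormedModule _ c); auto.
      intro n. destruct (Nat.leb (S x) n).
      * change norm with Rabs. rewrite Rabs_pos_eq; auto; lra.
      * change norm with Rabs. rewrite Rabs_R0; auto.
Qed.

Lemma unb_eq x : unb_pmf r p x = Series (fun k => b (x + k)%nat).
Proof.
  unfold unb_pmf. rewrite <- shift_series.
  - apply Series_ext; intro n. unfold b. destruct (Nat.leb x n); unfold Rdiv; ring.
  - intro; apply Rlt_le, b_pos.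
  - apply ex_b.
Qed.

End S.

Theorem mainTheorem2 (r p : R) (hr : 0 < r) (hp0 : 0 < p) (hp1 : p < 1) :
  let q := 1 - p in
  (* the pmf of X ~ UNB(r,p) has the stated closed form *)
  (forall x : nat,
     unb_pmf r p x =
       q ^ x * Rpower p r / (1 + INR x) * nbinom r x
       * hyp2F1 1 (r + INR x) (2 + INR x) q) /\
  (* recurrence *)
  (forall x : nat,
     unb_pmf r p (S x) =
       unb_pmf r p x - Rpower p r * q ^ x / (INR x + 1) * nbinom r x) /\
  (* strict decrease *)
  (forall x : nat, unb_pmf r p (S x) < unb_pmf r p x).
Proof.
  intro q.
  assert (rec : forall x, unb_pmf r p x = b r p x + unb_pmf r p (S x)).
  { intro x. rewrite !unb_eq by auto. rewrite Series_incr_1.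
    - rewrite Nat.add_0_r. f_equal. apply Series_ext; intro k. f_equal; lia.
    - apply (ex_series_incr_n (b r p) x), ex_b; auto. }
  assert (bx : forall x, b r p x = Rpower p r * q ^ x / (INR x + 1) * nbinom r x).
  { intro x. unfold b, nb_pmf, q. rewrite plus_INR. simpl. field.
    pose proof (pos_INR x); lra. }
  split; [|split].
  - intro x. rewrite unb_eq by auto. unfold hyp2F1.
    rewrite <- Series_scal_l. apply Series_ext; intro k.
    unfold b, nb_pmf, nbinom. rewrite poch_add, poch_1.
    pose proof (poch_2 x k) as H2.
    change (Factorial.fact (S x + k)) with (S (x + k) * Factorial.fact (x + k))%nat in H2.
    change (Factorial.fact (S x)) with (S x * Factorial.fact x)%nat in H2.
    rewrite !mult_INR, !S_INR in H2.
    pose proof (fact_pos x). pose proof (fact_pos k). pose proof (fact_pos (x + k)).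
    pose proof (pos_INR x). pose proof (pos_INR k).
    assert (Hp2 : poch (2 + INR x) k = (INR (x + k) + 1) * INR (Factorial.fact (x + k)) / ((INR x + 1) * INR (Factorial.fact x))).
    { apply (Rmult_eq_reg_r ((INR x + 1) * INR (Factorial.fact x))); [|nra].
      rewrite H2. field. lra. }
    repeat rewrite plus_INR in *.
    rewrite Hp2, pow_add. unfold q. change (INR 1) with 1.
    assert (0 < 1 - p) by lra. assert (0 < (1-p)^x) by (apply pow_lt; lra).
    assert (0 < (1-p)^k) by (apply pow_lt; lra).
    pose proof (poch_pos (r + INR x) k ltac:(lra)).
    field. repeat split; lra.
  - intro x. rewrite (rec x), bx. ring.
  - intro x. rewrite (rec x). pose proof (b_pos r p hr hp1 x). lra.
Qed.
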